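(* Let $E$ be a $C$-pseudo-cone. Then $E$ is a $C$-asymptotic set if and only if $h_E(v)=0$ for all $v\in\partial\Omega_{C^\circ}$.
   Context: $C\subset\mathbb{R}^n$ ($n\ge2$) is a pointed closed convex cone with nonempty interior; $C^\circ$ its polar cone; $\partial\Omega_{C^\circ}=\mathbb{S}^{n-1}\cap\partial C^\circ$. A $C$-pseudo-cone is a nonempty closed convex set $E$ with $o\notin E$, $\lambda x\in E$ for all $x\in E,\lambda\ge1$, and recession cone equal to $C$. A $C$-asymptotic set is an unbounded closed convex set $\mathbb{A}\subset C$ with nonempty interior and $o\notin\mathbb{A}$ such that $\lim_{x\in\partial\mathbb{A},|x|\to\infty}d(x,\partial C)=0$. $h_E(v)=\sup_{x\in E}\langle x,v\rangle$. *)

(* Defs.v *)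
(* R : realType, points of R^n are row vectors 'rV[R]_n
   with the (product = Euclidean) topology of MathComp-Analysis. *)
From HB Require Import structures.
From mathcomp Require Import all_boot all_order all_algebra.
From mathcomp Require Import all_classical all_reals all_analysis.
Set Implicit Arguments. Unset Strict Implicit. Unset Printing Implicit Defensive.
Import Order.TTheory GRing.Theory Num.Theory.
Import numFieldNormedType.Exports.
Local Open Scope classical_set_scope.
Local Open Scope ring_scope.

Section Defs.
Variables (R : realType) (n : nat).
Local Notation V := 'rV[R]_n.

Definition dotp (x y : V) : R := \sum_(i < n) x ord0 i * y ord0 i.
Definition enorm (x : V) : R := Num.sqrt (dotp x x).

Definition origin : V := 0.

Definition convex_set_in (A : set V) : Prop :=
  forall x y t, A x -> A y -> 0 <= t <= 1 -> A ((1 - t) *: x + t *: y).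

Definition boundary (A : set V) : set V := closure A `\` interior A.

Definition unit_sphere : set V := [set x | enorm x = 1].

Definition is_cone (C : set V) : Prop :=
  C origin /\ forall x (l : R), C x -> 0 <= l -> C (l *: x).
Definition pointed (C : set V) : Prop :=
  forall x, C x -> C (- x) -> x = 0.
Definition pcc_cone (C : set V) : Prop :=
  is_cone C /\ convex_set_in C /\ closed C /\ pointed C /\ interior C !=set0.

Definition polar (C : set V) : set V := [set y | forall x, C x -> dotp x y <= 0].

(* \partial \Omega_{C^\circ} = S^{n-1} \cap \partial C^\circ *)
Definition Omega_bd (C : set V) : set V := unit_sphere `&` boundary (polar C).

Definition recession_cone (E : set V) : set V :=
  [set y | forall x (l : R), E x -> 0 <= l -> E (x + l *: y)].

Definition pseudo_cone (C E : set V) : Prop :=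
  E !=set0 /\ closed E /\ convex_set_in E /\ ~ E origin /\
  (forall x (l : R), E x -> 1 <= l -> E (l *: x)) /\
  recession_cone E = C.

Definition unbounded (A : set V) : Prop :=
  forall M : R, exists x, A x /\ M < enorm x.

Definition dist_to (x : V) (S : set V) : \bar R :=
  ereal_inf [set (enorm (x - y))%:E | y in S].

Definition asymptotic_set (C A : set V) : Prop :=
  unbounded A /\ closed A /\ convex_set_in A /\ A `<=` C /\
  interior A !=set0 /\ ~ A origin /\
  (forall e : R, 0 < e -> exists M : R, forall x,
      boundary A x -> M < enorm x -> (dist_to x (boundary C) < e%:E)%E).

Definition support_fun (E : set V) (v : V) : \bar R :=
  ereal_sup [set (dotp x v)%:E | x in E].

End Defs.

(* Main.v *)
Require Import Defs.
From HB Require Import structures.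
From mathcomp Require Import all_boot all_order all_algebra.
From mathcomp Require Import all_classical all_reals all_analysis.
From mathcomp Require Import ring lra.
Import Order.TTheory GRing.Theory Num.Theory.
Import numFieldNormedType.Exports.
Local Open Scope classical_set_scope.
Local Open Scope ring_scope.

Lemma dotpC {R : realType} {n : nat} (x y : 'rV[R]_n) : dotp x y = dotp y x.
Proof. by rewrite /dotp; apply: eq_bigr => i _; rewrite mulrC. Qed.

Lemma dotpDl {R : realType} {n : nat} (x y z : 'rV[R]_n) :
  dotp (x + y) z = dotp x z + dotp y z.
Proof. by rewrite /dotp -big_split; apply: eq_bigr => i _; rewrite mxE mulrDl. Qed.

Lemma dotpZl {R : realType} {n : nat} (a : R) (x y : 'rV[R]_n) :
  dotp (a *: x) y = a * dotp x y.
Proof. by rewrite /dotp mulr_sumr; apply: eq_bigr => i _; rewrite mxE mulrA. Qed.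

Lemma dotpNl {R : realType} {n : nat} (x y : 'rV[R]_n) : dotp (- x) y = - dotp x y.
Proof. by rewrite -scaleN1r dotpZl mulN1r. Qed.

Lemma dotpBl {R : realType} {n : nat} (x y z : 'rV[R]_n) :
  dotp (x - y) z = dotp x z - dotp y z.
Proof. by rewrite dotpDl dotpNl. Qed.

Lemma dotpDr {R : realType} {n : nat} (x y z : 'rV[R]_n) :
  dotp z (x + y) = dotp z x + dotp z y.
Proof. by rewrite dotpC dotpDl !(dotpC z). Qed.

Lemma dotpZr {R : realType} {n : nat} (a : R) (x y : 'rV[R]_n) :
  dotp y (a *: x) = a * dotp y x.
Proof. by rewrite dotpC dotpZl dotpC. Qed.

Lemma dotpNr {R : realType} {n : nat} (x y : 'rV[R]_n) : dotp y (- x) = - dotp y x.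
Proof. by rewrite dotpC dotpNl dotpC. Qed.

Lemma dotpBr {R : realType} {n : nat} (x y z : 'rV[R]_n) :
  dotp z (x - y) = dotp z x - dotp z y.
Proof. by rewrite dotpDr dotpNr. Qed.

Lemma dotp0l {R : realType} {n : nat} (y : 'rV[R]_n) : dotp 0 y = 0.
Proof. by rewrite -(scale0r 0) dotpZl mul0r. Qed.

Lemma dotp0r {R : realType} {n : nat} (y : 'rV[R]_n) : dotp y 0 = 0.
Proof. by rewrite dotpC dotp0l. Qed.

Lemma dotpxx_ge0 {R : realType} {n : nat} (x : 'rV[R]_n) : 0 <= dotp x x.
Proof. by apply: sumr_ge0 => i _; rewrite -expr2 sqr_ge0. Qed.

Lemma dotpxx_eq0 {R : realType} {n : nat} (x : 'rV[R]_n) : dotp x x = 0 -> x = 0.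
Proof.
move=> h; apply/rowP => i; rewrite mxE.
have nn : forall j : 'I_n, predT j -> 0 <= x ord0 j * x ord0 j.
  by move=> j _; rewrite -expr2 sqr_ge0.
have /(_ i isT) := psumr_eq0P nn h.
by move/eqP; rewrite mulf_eq0 orbb => /eqP.
Qed.

Lemma enorm_ge0 {R : realType} {n : nat} (x : 'rV[R]_n) : 0 <= enorm x.
Proof. exact: sqrtr_ge0. Qed.

Lemma enorm_sq {R : realType} {n : nat} (x : 'rV[R]_n) : enorm x ^+ 2 = dotp x x.
Proof. by rewrite sqr_sqrtr // dotpxx_ge0. Qed.

Lemma enormZ {R : realType} {n : nat} (a : R) (x : 'rV[R]_n) : enorm (a *: x) = `|a| * enorm x.
Proof.
by rewrite /enorm dotpZl dotpZr mulrA -expr2 sqrtrM ?sqr_ge0 // sqrtr_sqr.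
Qed.

Lemma enormN {R : realType} {n : nat} (x : 'rV[R]_n) : enorm (- x) = enorm x.
Proof. by rewrite -scaleN1r enormZ normrN normr1 mul1r. Qed.

Lemma enormB {R : realType} {n : nat} (x y : 'rV[R]_n) : enorm (x - y) = enorm (y - x).
Proof. by rewrite -enormN opprB. Qed.

Lemma enorm0 {R : realType} {n : nat} : enorm (0 : 'rV[R]_n) = 0.
Proof. by rewrite /enorm dotp0l sqrtr0. Qed.

Lemma enorm_eq0 {R : realType} {n : nat} (x : 'rV[R]_n) : enorm x = 0 -> x = 0.
Proof.
move=> h; apply: dotpxx_eq0; by rewrite -enorm_sq h expr0n.
Qed.

Lemma CS {R : realType} {n : nat} (x y : 'rV[R]_n) : dotp x y <= enorm x * enorm y.
Proof.
have [x0|xn0] := eqVneq x 0; first by rewrite x0 dotp0l enorm0 mul0r.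
have [y0|yn0] := eqVneq y 0; first by rewrite y0 dotp0r enorm0 mulr0.
set a := enorm x; set b := enorm y.
have a0 : 0 < a.
  rewrite lt_neqAle enorm_ge0 andbT; apply/eqP => h; move/eqP: xn0; apply.
  exact: enorm_eq0.
have b0 : 0 < b.
  rewrite lt_neqAle enorm_ge0 andbT; apply/eqP => h; move/eqP: yn0; apply.
  exact: enorm_eq0.
have := dotpxx_ge0 (b *: x - a *: y).
rewrite !dotpBl !dotpBr !dotpZl !dotpZr -!enorm_sq -/a -/b (dotpC y x).
move=> h.
have hab : 0 < a * b by rewrite mulr_gt0.
nra.
Qed.

Lemma CSl {R : realType} {n : nat} (x y : 'rV[R]_n) : - (enorm x * enorm y) <= dotp x y.
Proof. by rewrite lerNl -dotpNl -(enormN x) CS. Qed.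

Lemma enormD {R : realType} {n : nat} (x y : 'rV[R]_n) : enorm (x + y) <= enorm x + enorm y.
Proof.
apply: (@le_trans _ _ (Num.sqrt ((enorm x + enorm y) ^+ 2))); last first.
  by rewrite sqrtr_sqr ger0_norm // addr_ge0 // enorm_ge0.
rewrite {1}/enorm ler_sqrt; last by rewrite sqr_ge0.
rewrite dotpDl !dotpDr (dotpC y x) sqrrD -!enorm_sq.
have := CS x y; nra.
Qed.

Lemma enorm_coord {R : realType} {n : nat} (x : 'rV[R]_n) i : `|x ord0 i| <= enorm x.
Proof.
rewrite -sqrtr_sqr /enorm ler_sqrt ?dotpxx_ge0 // /dotp (bigD1 i) //= -expr2 lerDl.
by apply: sumr_ge0 => j _; rewrite -expr2 sqr_ge0.
Qed.

Lemma mxnorm_coord {R : realType} {n : nat} (x : 'rV[R]_n) i : `|x ord0 i| <= `|x|.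
Proof.
have /mapP[j Hj ->] : `|x ord0 i| \in [seq `|x k.1 k.2| | k : 'I_1 * 'I_n].
  by apply/mapP; exists (ord0, i) => //=; rewrite mem_enum.
have -> : `|x| = mx_norm x by [].
by rewrite mx_normrE; apply/bigmax_geP; right => /=; exists j.
Qed.

Lemma mxnorm_le_enorm {R : realType} {n : nat} (x : 'rV[R]_n) : `|x| <= enorm x.
Proof.
have -> : `|x| = mx_norm x by [].
rewrite mx_normrE; apply/bigmax_leP; split; first exact: enorm_ge0.
by move=> [i j] _ /=; rewrite (ord1 i); exact: enorm_coord.
Qed.

Lemma enorm_le_mxnorm {R : realType} {n : nat} (x : 'rV[R]_n) : enorm x <= n%:R * `|x|.
Proof.
have m0 : 0 <= `|x| by [].
rewrite -[leRHS]ger0_norm ?mulr_ge0 // -sqrtr_sqr /enorm ler_sqrt ?sqr_ge0 //.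
apply: (@le_trans _ _ (n%:R * `|x| ^+ 2)).
  rewrite /dotp -[n in n%:R](card_ord n) -sumr_const mulr_suml.
  apply: ler_sum => i _; rewrite mul1r.
  rewrite -expr2 -real_normK ?num_real // lerXn2r ?nnegrE //; exact: mxnorm_coord.
rewrite exprMn ler_wpM2r ?sqr_ge0 // -natrX ler_nat.
by case: (n) => // k; rewrite expnS leq_pmulr.
Qed.

Lemma nbhs_enormP {R : realType} {n : nat} (z : 'rV[R]_n) (A : set 'rV[R]_n) :
  nbhs z A <-> exists2 r : R, 0 < r & forall y, enorm (y - z) < r -> A y.
Proof.
split.
  move=> /nbhs_ballP[e e0 he]; exists e => // y hy; apply: he.
  rewrite -ball_normE /ball_ /=.
  by apply: le_lt_trans (mxnorm_le_enorm _) _; rewrite enormB.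
move=> [r r0 hr]; apply/nbhs_ballP.
have n1 : 0 < n.+1%:R :> R by rewrite ltr0n.
exists (r / n.+1%:R); first by rewrite /= divr_gt0.
move=> y; rewrite -ball_normE /ball_ /= => hy; apply: hr.
rewrite enormB; apply: le_lt_trans (enorm_le_mxnorm _) _.
apply: (@le_lt_trans _ _ (n%:R * (r / n.+1%:R))).
  by rewrite ler_wpM2l // ltW.
rewrite mulrCA gtr_pMr // ltr_pdivrMr // mul1r ltr_nat; exact: ltnSn.
Qed.

Lemma interior_enormP {R : realType} {n : nat} (z : 'rV[R]_n) (A : set 'rV[R]_n) :
  interior A z <-> exists2 r : R, 0 < r & forall y, enorm (y - z) < r -> A y.
Proof. exact: nbhs_enormP. Qed.

Lemma closure_enormP {R : realType} {n : nat} (z : 'rV[R]_n) (A : set 'rV[R]_n) :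
  closure A z <-> forall r : R, 0 < r -> exists y, A y /\ enorm (y - z) < r.
Proof.
split.
  move=> h r r0.
  have [y [Ay By]] := h [set y | enorm (y - z) < r] (proj2 (nbhs_enormP _ _) (ex_intro2 _ _ r r0 (fun y h => h))).
  by exists y.
move=> h B /nbhs_enormP[r r0 hr].
have [y [Ay Hy]] := h r r0.
by exists y; split => //; exact: hr.
Qed.

Lemma closed_enorm {R : realType} {n : nat} (z : 'rV[R]_n) (A : set 'rV[R]_n) :
  closed A -> (forall r : R, 0 < r -> exists y, A y /\ enorm (y - z) < r) -> A z.
Proof.
move=> cA h; have -> : A = closure A by apply/closure_id.
exact/closure_enormP.
Qed.

Lemma le_eps {R : realType} (x y : R) : (forall e, 0 < e -> x <= y + e) -> x <= y.
Proof.
move=> h; rewrite leNgt; apply/negP => hxy.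
have e0 : 0 < (x - y) / 2 by rewrite divr_gt0 // subr_gt0.
have := h _ e0; lra.
Qed.

Lemma cluster_seq {R : realType} {n : nat} (y : nat -> 'rV[R]_n) (B : R) :
  (forall k, enorm (y k) <= B) ->
  exists q, forall e, 0 < e -> forall N, exists k, (N <= k)%N /\ enorm (y k - q) < e.
Proof.
move=> hy.
pose K := [set x : 'rV[R]_n | enorm x <= B].
have cK : compact K.
  apply: bounded_closed_compact.
    exists B; split; first exact: num_real.
    move=> M hM x Kx; apply: le_trans (mxnorm_le_enorm _) (le_trans Kx (ltW hM)).
  move=> z /closure_enormP hz; rewrite /K /=; apply: le_eps => e e0.
  have [w [Kw hw]] := hz e e0.
  have := enormD w (z - w); rewrite addrC subrK => h.
  apply: le_trans h _; apply: lerD => //; rewrite enormB; exact: ltW.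
have FK : (y @ \oo) K by exists 0%N => // k _; exact: hy.
have [q [Kq cq]] := cK (y @ \oo) _ FK.
exists q => e e0 N.
have F1 : (y @ \oo) [set z | exists k, (N <= k)%N /\ z = y k].
  by exists N => // k hk; exists k.
have F2 : nbhs q [set z | enorm (z - q) < e].
  by apply/nbhs_enormP; exists e.
have [z [[k [hk ->]] hz]] := cq _ _ F1 F2.
by exists k.
Qed.

Lemma seg_diff {R : realType} {n : nat} (x d : 'rV[R]_n) (t s : R) :
  (x + t *: d) - (x + s *: d) = (t - s) *: d.
Proof. by rewrite opprD addrACA subrr add0r scalerBl. Qed.

Lemma seg_boundary {R : realType} {n : nat} (A : set 'rV[R]_n) (x d : 'rV[R]_n) (T : R) :
  closed A -> 0 < T -> A x -> ~ A (x + T *: d) ->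
  exists s, 0 <= s < T /\ A (x + s *: d) /\ ~ interior A (x + s *: d).
Proof.
move=> cA T0 Ax nAT.
pose S := [set t : R | 0 <= t <= T /\ A (x + t *: d)].
have S0 : S 0 by split; [rewrite lexx ltW | rewrite scale0r addr0].
have ubS : has_ubound S by exists T => t [/andP[_ ?] _].
have hsS : has_sup S by split; [exists 0 | ].
set s := sup S.
have sub : forall t, S t -> t <= s by move=> t St; exact: ub_le_sup.
have s0 : 0 <= s by exact: sub.
have sT : s <= T by apply: ge_sup; [exists 0 | move=> t [/andP[_ ?] _]].
have dn1 : 0 < enorm d + 1 by apply: ltr_pwDr => //; exact: enorm_ge0.
have As : A (x + s *: d).
  apply: closed_enorm => // r r0.
  have eps0 : 0 < r / (enorm d + 1) by rewrite divr_gt0.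
  have [t St ht] := sup_adherent eps0 hsS.
  exists (x + t *: d); split; first by case: St.
  rewrite seg_diff enormZ.
  have ts := sub _ St.
  rewrite ler0_norm ?subr_le0 // opprB.
  apply: (@le_lt_trans _ _ (r / (enorm d + 1) * enorm d)).
    by apply: ler_wpM2r; [exact: enorm_ge0 | move: ht; rewrite -/s; lra].
  rewrite mulrAC ltr_pdivrMr // ltr_pM2l //; lra.
exists s; split; first by rewrite s0 /= lt_neqAle sT andbT; apply/eqP => e; apply: nAT; rewrite -e.
split=> // /interior_enormP[r r0 hr].
have Ts : 0 < T - s by rewrite subr_gt0 lt_neqAle sT andbT; apply/eqP => e; apply: nAT; rewrite -e.
set eta := Num.min (T - s) (r / (enorm d + 1)) / 2.
have eta0 : 0 < eta by rewrite divr_gt0 // lt_min Ts divr_gt0.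
have eta1 : eta < T - s.
  rewrite /eta ltr_pdivrMr // ; apply: (@le_lt_trans _ _ (T - s)); first by rewrite ge_min lexx.
  lra.
have eta2 : eta * enorm d < r.
  apply: (@le_lt_trans _ _ (r / (enorm d + 1) * enorm d)).
    apply: ler_wpM2r; first exact: enorm_ge0.
    rewrite /eta ler_pdivrMr //; apply: (@le_trans _ _ (r / (enorm d + 1))); first by rewrite ge_min lexx orbT.
    have : 0 <= r / (enorm d + 1) by rewrite divr_ge0 // ltW.
    lra.
  rewrite mulrAC ltr_pdivrMr // ltr_pM2l //; lra.
have : S (s + eta).
  split; first by apply/andP; split; lra.
  rewrite -[x + _](subrK (x + s *: d)) seg_diff; apply: hr.
  rewrite addrK enormZ ger0_norm; last by lra.
  by rewrite (_ : s + eta - s = eta) //; lra.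
move/sub; lra.
Qed.

Lemma arch_inv {R : realType} (e : R) : 0 < e ->
  exists N : nat, forall k : nat, (N <= k)%N -> (k.+1%:R)^-1 < e.
Proof.
move=> e0; exists (Num.truncn e^-1) => k hk.
rewrite invf_plt ?posrE ?ltr0n //.
by apply: lt_le_trans (truncnS_gt _) _; rewrite ler_nat ltnS.
Qed.

Definition i_ {R : realType} (k : nat) : R := (k.+1%:R)^-1.

Lemma projection {R : realType} {n : nat} (E : set 'rV[R]_n) (p : 'rV[R]_n) :
  closed E -> E !=set0 -> exists q, E q /\ forall y, E y -> enorm (q - p) <= enorm (y - p).
Proof.
move=> cE [y0 Ey0].
pose D := [set enorm (y - p) | y in E].
have hD : has_inf D.
  split; first by exists (enorm (y0 - p)); exists y0.
  by exists 0 => _ [y _ <-]; exact: enorm_ge0.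
set m := inf D.
have lbD : forall y, E y -> m <= enorm (y - p) by move=> y Ey; apply: (ge_inf hD.2); exists y.
have hseq : forall k : nat, exists y, E y /\ enorm (y - p) < m + (k.+1%:R)^-1.
  move=> k; have k0 : 0 < (k.+1%:R)^-1 :> R by rewrite invr_gt0 ltr0n.
  have [z [y Ey yz] hy] := inf_adherent k0 hD.
  by exists y; rewrite yz.
have [yk hyk] := choice hseq.
have m0 : 0 <= m.
  apply: lb_le_inf; first by case: hD.
  by move=> _ [y _ <-]; exact: enorm_ge0.
have hb : forall k, enorm (yk k) <= enorm p + m + 1.
  move=> k; have [_ hk] := hyk k.
  have := enormD (yk k - p) p; rewrite subrK => h.
  apply: le_trans h _.
  have : (k.+1%:R)^-1 <= 1 :> R by rewrite invf_le1 ?ler1n ?ltr0n.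
  move: hk; generalize (k.+1%:R^-1 : R) => i hk hi; lra.
have [q hq] := @cluster_seq _ _ yk _ hb.
exists q; split.
  apply: closed_enorm => // r r0.
  have [k [_ hk]] := hq r r0 0%N.
  by exists (yk k); split => //; case: (hyk k).
move=> y Ey; apply: (le_trans _ (lbD _ Ey)); apply: le_eps => e e0.
have e2 : 0 < e / 2 by rewrite divr_gt0.
have [N hN] := arch_inv _ e2.
have [k [hk hk2]] := hq _ e2 N.
have [_ hk3] := hyk k.
have hi : i_ (R:=R) k < e / 2 := hN k hk.
have := enormD (q - yk k) (yk k - p); rewrite addrA subrK => h.
rewrite (enormB q (yk k)) in h.
move: hk3 hi; rewrite -/(i_ (R:=R) k); generalize (i_ (R:=R) k) => i hk3 hi.
lra.
Qed.

Lemma small_t {R : realType} (a b : R) :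
  (forall t, 0 < t <= 1 -> a <= t * b) -> 0 <= b -> a <= 0.
Proof.
move=> h b0; rewrite leNgt; apply/negP => a0.
have d0 : 0 < a + b + 1 by lra.
have t0 : 0 < a / (a + b + 1) by rewrite divr_gt0.
have t1 : a / (a + b + 1) <= 1 by rewrite ler_pdivrMr // mul1r; lra.
have := h (a / (a + b + 1)) (introT andP (conj t0 t1)).
rewrite mulrAC ler_pdivlMr //; nra.
Qed.

Lemma support_normal {R : realType} {n : nat} (C E : set 'rV[R]_n) (x : 'rV[R]_n) (eta : R) :
  closed E -> convex_set_in E -> recession_cone E = C -> boundary E x -> 0 < eta ->
  exists w, enorm w = 1 /\ polar C w /\ forall y, E y -> dotp y w <= dotp x w + eta.
Proof.
move=> cE cvE rE [clx nix] eta0.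
have Ex : E x by have -> : E = closure E by apply/closure_id.
have [p [hp nEp]] : exists p, enorm (p - x) < eta /\ ~ E p.
  apply: contrapT => hc; apply: nix; apply/interior_enormP; exists eta => // y hy.
  by apply: contrapT => nEy; apply: hc; exists y.
have [q [Eq hq]] := @projection _ _ E p cE (ex_intro _ x Ex).
set g := p - q.
have gn0 : g != 0 by apply/eqP => g0; apply: nEp; move/eqP: g0; rewrite subr_eq0 => /eqP ->.
have c0 : 0 < enorm g.
  rewrite lt_neqAle enorm_ge0 andbT; apply/eqP => h; move/eqP: gn0; apply.
  exact: enorm_eq0.
have var : forall y, E y -> dotp (y - q) g <= 0.
  move=> y Ey; apply: (@small_t _ _ (dotp (y - q) (y - q) / 2)); last first.
    by rewrite divr_ge0 // dotpxx_ge0.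
  move=> t /andP[t0 t1].
  have Ez : E ((1 - t) *: q + t *: y) by apply: cvE => //; rewrite ltW.
  have h := hq _ Ez.
  have h2 : dotp (q - p) (q - p) <= dotp ((1 - t) *: q + t *: y - p) ((1 - t) *: q + t *: y - p).
    rewrite -!enorm_sq; have := enorm_ge0 (q - p); nra.
  have e1 : (1 - t) *: q + t *: y - p = - g + t *: (y - q).
    by apply/rowP => i; rewrite /g !mxE; ring.
  have e2 : q - p = - g by rewrite /g opprB.
  rewrite e1 e2 in h2.
  suff h3 : t * (2 * dotp (y - q) g) <= t * (t * dotp (y - q) (y - q)).
    by rewrite ler_pM2l // in h3; lra.
  move: h2; generalize (y - q) => u; generalize g => g' h2.
  rewrite !dotpDl !dotpDr !dotpNl !dotpNr !dotpZl !dotpZr opprK (dotpC g' u) in h2.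
  lra.
set w := (enorm g)^-1 *: g.
exists w; split.
  by rewrite /w enormZ ger0_norm ?invr_ge0 ?enorm_ge0 // mulVf // gt_eqF.
split.
  move=> c Cc.
  have Eqc : E (q + 1 *: c) by rewrite -rE in Cc; apply: Cc.
  have := var _ Eqc; rewrite scale1r addrAC subrr add0r => h.
  rewrite /w dotpZr; apply: mulr_ge0_le0 => //; by rewrite invr_ge0 enorm_ge0.
move=> y Ey.
have h1 : dotp y w <= dotp q w.
  have := var _ Ey; rewrite dotpBl => h.
  rewrite /w !dotpZr; apply: ler_wpM2l; [by rewrite invr_ge0 enorm_ge0 | lra].
have h2 : dotp q w = dotp p w - enorm g.
  have -> : q = p - g by rewrite /g opprB addrC subrK.
  rewrite dotpBl; congr (_ - _).
  rewrite /w dotpZr -enorm_sq expr2 mulrA mulVf ?mul1r // gt_eqF //.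
have h3 : dotp p w = dotp x w + dotp (p - x) w by rewrite dotpBl addrC subrK.
have h4 : dotp (p - x) w <= enorm (p - x).
  have := CS (p - x) w; rewrite /w enormZ ger0_norm ?invr_ge0 ?enorm_ge0 // mulVf ?gt_eqF //.
  by rewrite mulr1.
lra.
Qed.

Lemma cone_add {R : realType} {n : nat} (C : set 'rV[R]_n) x y :
  pcc_cone C -> C x -> C y -> C (x + y).
Proof.
move=> [[_ Cs] [Ccv _]] Cx Cy.
have h : C ((1 - 2^-1) *: x + 2^-1 *: y).
  by apply: Ccv => //; apply/andP; split; [rewrite invr_ge0 | rewrite invf_le1] ; lra.
have := Cs _ 2 h (ler0n _ 2).
have -> : (1 - 2^-1 : R) = 2^-1 by field.
rewrite -scalerDr scalerA mulfV ?scale1r //.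
Qed.

Lemma dist_ge {R : realType} {n : nat} (C : set 'rV[R]_n) (z : 'rV[R]_n) (rr : R) :
  0 < rr -> (forall y, enorm (y - z) < rr -> C y) -> (rr%:E <= dist_to z (boundary C))%E.
Proof.
move=> rr0 hb; apply/ereal_infP => _ [b [_ nib] <-]; rewrite lee_fin.
rewrite leNgt; apply/negP => hzb; apply: nib; apply/interior_enormP.
exists (rr - enorm (z - b)); first by rewrite subr_gt0.
move=> y hy; apply: hb.
have := enormD (y - b) (b - z); rewrite addrA subrK (enormB b z) => h.
lra.
Qed.

Lemma polar_closed {R : realType} {n : nat} (C : set 'rV[R]_n) v :
  closure (polar C) v -> polar C v.
Proof.
move=> /closure_enormP hv c Cc.
have hc : 0 < enorm c + 1 by apply: ltr_pwDr => //; exact: enorm_ge0.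
rewrite -[dotp c v]addr0; apply: le_eps => e e0.
have ee : 0 < e / (enorm c + 1) by rewrite divr_gt0.
have [v' [Pv' hv']] := hv _ ee.
have h1 := Pv' c Cc.
have h2 := CS c (v - v').
have -> : v = v' + (v - v') by rewrite addrC subrK.
rewrite dotpDr add0r.
rewrite enormB in h2.
have h3 : enorm c * enorm (v' - v) <= enorm c * (e / (enorm c + 1)).
  by apply: ler_wpM2l; [exact: enorm_ge0 | exact: ltW].
have h4 : enorm c * (e / (enorm c + 1)) <= e.
  rewrite mulrCA ger_pMr // ler_pdivrMr // mul1r; lra.
lra.
Qed.

Lemma E_sub_C {R : realType} {n : nat} (C E : set 'rV[R]_n) :
  pseudo_cone C E -> E `<=` C.
Proof.
move=> [_ [cE [cvE [_ [Esc rE]]]]] x Ex; rewrite -rE => x0 l Ex0 l0.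
apply: closed_enorm => // r r0.
set K := enorm x0 + 1.
have K0 : 0 < K by apply: ltr_pwDr => //; exact: enorm_ge0.
have lKr : 0 <= l * K / r by rewrite divr_ge0 ?mulr_ge0 // ltW.
set lam := 1 + l + l * K / r.
have lam1 : 1 <= lam by rewrite /lam; lra.
have lam0 : 0 < lam by lra.
have hlam : r * lam = r + r * l + l * K.
  by rewrite /lam; field; rewrite gt_eqF.
set th := l / lam.
have th0 : 0 <= th by rewrite divr_ge0 // ltW.
have th1 : th <= 1 by rewrite ler_pdivrMr // mul1r /lam; lra.
exists ((1 - th) *: x0 + th *: (lam *: x)); split.
  by apply: cvE => //; [exact: Esc | rewrite th0 th1].
rewrite scalerA /th mulfVK ?gt_eqF // scalerBl scale1r.
have -> : x0 - l / lam *: x0 + l *: x - (x0 + l *: x) = - ((l / lam) *: x0).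
  by apply/rowP => i; rewrite !mxE; ring.
rewrite enormN enormZ ger0_norm // -/th.
apply: (@le_lt_trans _ _ (th * K)).
  by apply: ler_wpM2l => //; rewrite /K lerDl.
rewrite /th mulrAC ltr_pdivrMr // hlam.
have : 0 <= r * l by rewrite mulr_ge0 // ltW.
lra.
Qed.

Lemma not_interior_near {R : realType} {n : nat} (A : set 'rV[R]_n) z (r : R) :
  ~ interior A z -> 0 < r -> exists p, enorm (p - z) < r /\ ~ A p.
Proof.
move=> nix r0; apply: contrapT => hc; apply: nix; apply/interior_enormP; exists r => // y hy.
by apply: contrapT => nEy; apply: hc; exists y.
Qed.

Lemma unit_of {R : realType} {n : nat} (c : 'rV[R]_n) : c != 0 ->
  enorm ((enorm c)^-1 *: c) = 1 /\ 0 < enorm c.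
Proof.
move=> cn0.
have c0 : 0 < enorm c.
  rewrite lt_neqAle enorm_ge0 andbT; apply/eqP => h; move/eqP: cn0; apply.
  exact: enorm_eq0.
by rewrite enormZ ger0_norm ?invr_ge0 ?enorm_ge0 // mulVf // gt_eqF.
Qed.


Lemma dir1 {R : realType} {n : nat} (C E : set 'rV[R]_n) :
  pcc_cone C -> pseudo_cone C E -> asymptotic_set C E ->
  forall v, Omega_bd C v -> support_fun E v = 0%E.
Proof.
move=> hC hE [_ [_ [_ [_ [_ [_ lim]]]]]] v [uv [clv niv]].
have pv : polar C v := polar_closed _ _ clv.
have sub := @E_sub_C _ _ C E hE.
have [[y0 Ey0] [cE [cvE [noE [Esc rE]]]]] := hE.
have le0 : (support_fun E v <= 0)%E.
  apply: ge_ereal_sup => _ [y Ey <-]; rewrite lee_fin; exact: pv _ (sub _ Ey).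
have ubs : forall y, E y -> ((dotp y v)%:E <= support_fun E v)%E.
  by move=> y Ey; apply: ereal_sup_ubound; exists y.
have ge := ubs _ Ey0.
apply/eqP; rewrite eq_le le0 /=.
move: le0 ge ubs; case: (support_fun E v) => [s| |] //=; rewrite ?lee_fin => s0 hs ubs.
rewrite leNgt; apply/negP => sneg.
set del := - s.
have del0 : 0 < del by rewrite /del oppr_gt0.
have hE' : forall y, E y -> dotp y v <= - del.
  by move=> y Ey; rewrite /del opprK -lee_fin; exact: ubs.
have [[C0 Cs] [Ccv [Ccl [Cpt [a inta]]]]] := hC.
move: inta => /interior_enormP[r0 r00 hball].
have y01 : 0 < enorm y0 + 1 by apply: ltr_pwDr => //; exact: enorm_ge0.
set rho0 := (enorm y0 + 1) / r0.
have rho00 : 0 < rho0 by rewrite divr_gt0.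
have Crho : C (rho0 *: a - y0).
  have : C (a - rho0^-1 *: y0).
    apply: hball; rewrite addrAC subrr add0r enormN enormZ ger0_norm ?invr_ge0 ?ltW //.
    rewrite /rho0 invf_div mulrAC ltr_pdivrMr // ltr_pM2l //; lra.
  move/(Cs _ rho0) => /(_ (ltW rho00)).
  by rewrite scalerBr scalerA mulfV ?gt_eqF // scale1r.
set ea := enorm a.
have ea0 : 0 <= ea by exact: enorm_ge0.
set e := del * r0 / (2 * (ea + 1)).
have e0 : 0 < e by rewrite /e divr_gt0 ?mulr_gt0 //; lra.
have [M hM] := lim e e0.
set t := `|M| + rho0 * ea + 1.
have t0 : 0 < t.
  have : 0 <= rho0 * ea by rewrite mulr_ge0 // ltW.
  have := normr_ge0 M; rewrite /t; lra.
set eps := del / (2 * t).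
have eps0 : 0 < eps by rewrite /eps divr_gt0 // mulr_gt0.
have teps : t * eps = del / 2 by rewrite /eps; field; rewrite gt_eqF.
have [v' [hv' nPv']] := @not_interior_near _ _ _ _ _ niv eps0.
have [c [Cc hc]] : exists c, C c /\ 0 < dotp c v'.
  apply: contrapT => hc; apply: nPv' => c Cc; rewrite leNgt; apply/negP => h.
  by apply: hc; exists c.
have cn0 : c != 0 by apply/eqP => c0; move: hc; rewrite c0 dotp0l ltxx.
have [u1 cpos] := @unit_of _ _ c cn0.
set u := (enorm c)^-1 *: c.
have Cu : C u by apply: Cs => //; rewrite invr_ge0 ltW.
have u1' : enorm u = 1 := u1.
have huv : - eps < dotp u v.
  have -> : v = v' + (v - v') by rewrite addrC subrK.
  rewrite dotpDr.
  have h1 : 0 < dotp u v' by rewrite /u dotpZl mulr_gt0 // invr_gt0.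
  have h2 := CSl u (v - v'); rewrite u1 mul1r enormB in h2.
  lra.
set xs := t *: u + rho0 *: a.
have Exs : E xs.
  have hc' : C (t *: u + (rho0 *: a - y0)) by apply: cone_add => //; apply: Cs => //; exact: ltW.
  rewrite -rE in hc'.
  have := hc' y0 1 Ey0 ler01; rewrite scale1r.
  by rewrite (_ : y0 + _ = xs) //; rewrite /xs; apply/rowP => i; rewrite !mxE; ring.
have nEt : ~ E (xs + rho0 *: - a).
  rewrite (_ : xs + _ = t *: u); last by rewrite /xs; apply/rowP => i; rewrite !mxE; ring.
  move/hE'; rewrite dotpZl.
  have : t * - eps < t * dotp u v by rewrite ltr_pM2l.
  rewrite mulrN teps; lra.
have [s1 [/andP[s10 s1r] [Ez niz]]] := @seg_boundary _ _ E xs (- a) rho0 cE rho00 Exs nEt.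
set rho := rho0 - s1.
have rho0p : 0 < rho by rewrite /rho subr_gt0.
have ez : xs + s1 *: - a = t *: u + rho *: a by rewrite /xs /rho; apply/rowP => i; rewrite !mxE; ring.
rewrite ez in Ez niz.
set z := t *: u + rho *: a.
have bz : boundary E z by split; [exact: subset_closure | ].
have key1 : del / 2 <= rho * (ea + 1).
  have h1 := hE' _ Ez; rewrite /z dotpDl (dotpZl t) (dotpZl rho) in h1.
  have h2 : t * - eps < t * dotp u v by rewrite ltr_pM2l.
  rewrite mulrN teps in h2.
  have h3 := CSl a v; rewrite uv mulr1 -/ea in h3.
  have h4 : rho * - ea <= rho * dotp a v by rewrite ler_pM2l.
  nra.
have nrm : M < enorm z.
  have h1 := enormD z (- (rho *: a)).
  rewrite (_ : z - rho *: a = t *: u) in h1; last by rewrite /z addrK.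
  rewrite enormZ (ger0_norm (ltW t0)) u1' mulr1 enormN enormZ (ger0_norm (ltW rho0p)) -/ea in h1.
  have : rho * ea <= rho0 * ea by rewrite ler_wpM2r // /rho lerBlDr lerDl.
  have := ler_norm M; rewrite /t in h1; lra.
have := hM _ bz nrm.
have dg : (e%:E <= dist_to z (boundary C))%E.
  apply: dist_ge => // y hy.
  have hy2 : C (a + rho^-1 *: (y - z)).
    apply: hball; rewrite addrAC subrr add0r enormZ ger0_norm ?invr_ge0 ?ltW //.
    rewrite mulrC ltr_pdivrMr //.
    apply: lt_le_trans hy _.
    rewrite /e ler_pdivrMr ?mulr_gt0 //; last lra.
    nra.
  have := @cone_add _ _ C _ _ hC (Cs _ _ Cu (ltW t0)) (Cs _ _ hy2 (ltW rho0p)).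
  have -> : t *: u + rho *: (a + rho^-1 *: (y - z)) = y; last by [].
  rewrite /z; apply/rowP => i; rewrite !mxE; field; by rewrite !gt_eqF.
by move=> h; move: dg; rewrite leNgt h.
Qed.


Lemma dir2 {R : realType} {n : nat} (C E : set 'rV[R]_n) :
  pcc_cone C -> pseudo_cone C E ->
  (forall v, Omega_bd C v -> support_fun E v = 0%E) -> asymptotic_set C E.
Proof.
move=> hC hE hv.
have sub := @E_sub_C _ _ C E hE.
have [[y0 Ey0] [cE [cvE [noE [Esc rE]]]]] := hE.
have [[C0 Cs] [Ccv [Ccl [Cpt [a inta]]]]] := hC.
move: inta => /interior_enormP[r0 r00 hball].
have y0n0 : y0 != 0 by apply/eqP => y00; apply: noE; rewrite /origin -y00.
have [_ y0pos] := @unit_of _ _ y0 y0n0.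
split.
  move=> M; exists ((1 + `|M| / enorm y0) *: y0); split.
    by apply: Esc => //; rewrite lerDl divr_ge0 // ltW.
  rewrite enormZ ger0_norm; last by rewrite addr_ge0 // divr_ge0 // ltW.
  rewrite mulrDl mul1r mulfVK ?gt_eqF //.
  have := ler_norm M; lra.
do 3 (split => //).
split.
  exists (y0 + a); apply/interior_enormP; exists r0 => // y hy.
  have : C (y - y0) by apply: hball; rewrite (_ : y - y0 - a = y - (y0 + a)) // opprD addrA.
  rewrite -rE => /(_ y0 1 Ey0 ler01); rewrite scale1r addrC subrK //.
split => //.
move=> e e0; apply: contrapT => hne.
have hM : forall M : R, exists x, boundary E x /\ M < enorm x /\ (e%:E <= dist_to x (boundary C))%E.
  move=> M; apply: contrapT => h; apply: hne; exists M => x bx mx.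
  rewrite ltNge; apply/negP => nd; apply: h; exists x; split => //.
have [xk hxk] := choice (fun k : nat => hM k%:R).
have e2 : 0 < e / 2 by rewrite divr_gt0.
have hw : forall k : nat, exists w, enorm w = 1 /\ polar C w /\
    forall y, E y -> dotp y w <= dotp (xk k) w + e / 2.
  by move=> k; have [bk _] := hxk k; exact: (@support_normal _ _ C E (xk k) (e/2) cE cvE rE bk e2).
have [wk hwk] := choice hw.
set K := enorm y0 + e / 2.
have facts : forall k : nat, [/\ C (xk k), (forall y, E y -> dotp y (wk k) <= - (e / 2)),
    k%:R < enorm (xk k) & - K <= dotp (xk k) (wk k)].
  move=> k; have [[clx nix] [mk dk]] := hxk k; have [w1 [pw hyw]] := hwk k.
  have Ex : E (xk k) by have -> : E = closure E by apply/closure_id.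
  have Cx := sub _ Ex.
  have dxw0 : dotp (xk k) (wk k) <= 0 := pw _ Cx.
  have ww : dotp (wk k) (wk k) = 1 by rewrite -enorm_sq w1 expr1n.
  have dle : dotp (xk k) (wk k) <= - e.
    have T0 : 0 < 1 - dotp (xk k) (wk k) by lra.
    have nCT : ~ C (xk k + (1 - dotp (xk k) (wk k)) *: wk k).
      move/pw; rewrite dotpDl dotpZl ww; lra.
    have [s [/andP[s0 sT] [Cz niz]]] := @seg_boundary _ _ C _ _ _ Ccl T0 Cx nCT.
    have bz : boundary C (xk k + s *: wk k) by split; [exact: subset_closure | ].
    have : (dist_to (xk k) (boundary C) <= (enorm (xk k - (xk k + s *: wk k)))%:E)%E.
      by apply: ereal_inf_lbound; exists (xk k + s *: wk k).
    move=> /(le_trans dk); rewrite lee_fin opprD addrA subrr add0r enormN enormZ w1 mulr1 ger0_norm // => es.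
    have := pw _ Cz; rewrite dotpDl dotpZl ww; lra.
  split => //.
  - by move=> y Ey; have := hyw _ Ey; lra.
  - have := hyw _ Ey0; have := CSl y0 (wk k); rewrite w1 mulr1 /K; lra.
have hb : forall k, enorm (wk k) <= 1 by move=> k; have [-> _] := hwk k.
have [w hw0] := @cluster_seq _ _ wk _ hb.
have K0 : 0 <= K by rewrite /K addr_ge0 ?enorm_ge0 // ltW.
have w1 : enorm w = 1.
  apply/eqP; rewrite eq_le; apply/andP; split.
    apply: le_eps => d d0; have [k [_ hk]] := hw0 d d0 0%N.
    have := enormD (w - wk k) (wk k); rewrite subrK (enormB w) => h.
    have [w1k _] := hwk k; lra.
  apply: le_eps => d d0; have [k [_ hk]] := hw0 d d0 0%N.
  have := enormD (wk k - w) w; rewrite subrK => h.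
  have [w1k _] := hwk k; lra.
have pw : polar C w.
  move=> c Cc; rewrite -[dotp c w]addr0; apply: le_eps => d d0.
  have hc : 0 < enorm c + 1 by apply: ltr_pwDr => //; exact: enorm_ge0.
  have dd : 0 < d / (enorm c + 1) by rewrite divr_gt0.
  have [k [_ hk]] := hw0 _ dd 0%N.
  have [_ [pwk _]] := hwk k.
  have h1 := pwk c Cc.
  have h2 := CS c (w - wk k).
  have -> : w = wk k + (w - wk k) by rewrite addrC subrK.
  rewrite dotpDr add0r (enormB w) in h2 *.
  have h3 : enorm c * enorm (wk k - w) <= enorm c * (d / (enorm c + 1)).
    by apply: ler_wpM2l; [exact: enorm_ge0 | exact: ltW].
  have h4 : enorm c * (d / (enorm c + 1)) <= d.
    rewrite mulrCA ger_pMr // ler_pdivrMr // mul1r; lra.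
  lra.
have niw : ~ interior (polar C) w.
  move=> /interior_enormP[r rpos hr]; clear r00 hball.
  have r4 : 0 < r / 4 by rewrite divr_gt0.

  set N := Num.truncn (K / (r / 4)).
  have [k [Nk hk]] := hw0 _ r4 N.+1.
  have [Cx _ kx lx] := facts k.
  have xpos : 0 < enorm (xk k) by apply: le_lt_trans kx; exact: ler0n.
  have Nx : K / (r / 4) < enorm (xk k).
    apply: lt_trans kx; apply: lt_le_trans (truncnS_gt _) _; rewrite ler_nat //.
  set u := (enorm (xk k))^-1 *: xk k.
  have Cu : C u by apply: Cs => //; rewrite invr_ge0 ltW.
  have u1 : enorm u = 1 by rewrite /u enormZ ger0_norm ?invr_ge0 ?ltW // mulVf ?gt_eqF.
  have hp : polar C (w + (3 * r / 4) *: u).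
    apply: hr; rewrite addrAC subrr add0r enormZ u1 mulr1 ger0_norm; last by rewrite divr_ge0 ?mulr_ge0 // ltW.
    lra.
  have := hp _ Cu; rewrite dotpDr dotpZr (_ : dotp u u = 1); last by rewrite -enorm_sq u1 expr1n.
  have h1 : - (r / 4) < dotp u (wk k).
    rewrite /u dotpZl.
    set ex := enorm (xk k) in Nx lx xpos *.
    rewrite ltr_pdivrMr // in Nx.
    have hinv : 0 < ex^-1 by rewrite invr_gt0.
    have h2 : ex^-1 * - K <= ex^-1 * dotp (xk k) (wk k) by rewrite ler_pM2l.
    have h3 : ex^-1 * K < ex^-1 * (ex * (r / 4)) by rewrite ltr_pM2l.
    rewrite mulKf ?gt_eqF // in h3.
    rewrite mulrN in h2; lra.
  have h2 := CSl u (w - wk k); rewrite u1 mul1r (enormB w) in h2.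
  have -> : w = wk k + (w - wk k) by rewrite addrC subrK.
  rewrite dotpDr.
  lra.
have := hv w (conj (w1 : unit_sphere w) (conj (subset_closure pw) niw)).
have lw : forall y, E y -> dotp y w <= - (e / 2).
  move=> y Ey; apply: le_eps => d d0.
  have hc : 0 < enorm y + 1 by apply: ltr_pwDr => //; exact: enorm_ge0.
  have dd : 0 < d / (enorm y + 1) by rewrite divr_gt0.
  have [k [_ hk]] := hw0 _ dd 0%N.
  have [_ hyk _ _] := facts k.
  have h1 := hyk _ Ey.
  have h2 := CS y (w - wk k).
  have -> : w = wk k + (w - wk k) by rewrite addrC subrK.
  rewrite dotpDr (enormB w) in h2 *.
  have h3 : enorm y * enorm (wk k - w) <= enorm y * (d / (enorm y + 1)).
    by apply: ler_wpM2l; [exact: enorm_ge0 | exact: ltW].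
  have h4 : enorm y * (d / (enorm y + 1)) <= d.
    rewrite mulrCA ger_pMr // ler_pdivrMr // mul1r; lra.
  lra.
have : (support_fun E w <= (- (e / 2))%:E)%E.
  by apply: ge_ereal_sup => _ [y Ey <-]; rewrite lee_fin; exact: lw.
move=> h hw1; rewrite hw1 lee_fin in h.
by move: h; rewrite oppr_ge0 leNgt e2.
Qed.


Theorem corollary3p1 (R : realType) (n : nat) (C E : set 'rV[R]_n) :
  (2 <= n)%N -> pcc_cone C -> pseudo_cone C E ->
  (asymptotic_set C E <->
   (forall v, Omega_bd C v -> support_fun E v = 0%E)).
Proof.
move=> _ hC hE; split.
  exact: dir1.
exact: dir2.
Qed.
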